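(* Let $n\in\mathbb{N}$, $\omega=\omega_n=\frac{n^2}{4}$, and $c>0$ such that $\frac{n^2+c^2}{2c}\notin\mathbb{Z}'$, where $\mathbb{Z}'$ is the set of even integers if $n$ is even and of odd integers if $n$ is odd. Consider the linear system of uncoupled ODEs $$\psi_m''(y)+i(m-c)\psi_m'(y)+\left(\omega-\frac{m^2}{4}\right)\psi_m(y)=0,\qquad m\in\mathbb{Z}',$$ whose solutions are spanned by $\psi_{m'}(y)=e^{\kappa y}\delta_{m,m'}$, where $\kappa$ is a root of $\kappa^2+i(m-c)\kappa+\omega-\frac{m^2}{4}=0$, i.e. $$\kappa=\kappa_m^{\pm}=\frac{i(c-m)\pm\sqrt{2cm-n^2-c^2}}{2},\qquad m\in\mathbb{Z}'.$$ Let $m_0$ be the largest element of $\mathbb{Z}'$ not exceeding $\frac{n^2+c^2}{2c}$, and let $E_m^{\pm}$ denote the eigenspace associated with the $m$-th Fourier component corresponding to the root $\kappa_m^{\pm}$. Then: (i) the phase space of this linear system decomposes into the direct sum $E^s\oplus E^u\oplus E^{c^+}\oplus E^{c^-}$, where $E^s=\oplus_{m>m_0}E_m^+$, $E^u=\oplus_{m>m_0}E_m^-$, $E^{c^+}=\oplus_{m\le m_0}E_m^+$, $E^{c^-}=\oplus_{m\le m_0}E_m^-$ (with $m\in\mathbb{Z}'$); (ii) considering all roots $\kappa_m^\pm$, $m\in\mathbb{Z}'$, together, the zero root $\kappa=0$ is semi-simple of multiplicity two, the purely imaginary roots $\kappa\in i\mathbb{R}$ are semi-simple of multiplicity at most three,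 and all other roots $\kappa\in\mathbb{C}$ are simple.
   Context: This linear system is the linearization at zero, with $\epsilon=0$, of the Fourier-mode system obtained from traveling solutions $\psi(x,y)=\sqrt{\epsilon}\sum_{m\in\mathbb{Z}'}\psi_m(y)e^{imx/2}$, $y=x-ct$, of a Gross--Pitaevskii equation. *)

(* Defs.v *)
From HB Require Import structures.
From mathcomp Require Import all_boot all_order all_algebra.
From mathcomp Require Import reals.
From mathcomp Require Export complex.
Set Implicit Arguments. Unset Strict Implicit. Unset Printing Implicit Defensive.
Import Order.TTheory GRing.Theory Num.Theory.
Local Open Scope ring_scope.
Local Open Scope complex_scope.

Section GP.
Variables (R : realType) (n : nat) (c : R).
Local Notation C := (R[i]).

Definition inZ' (m : int) : bool := odd `|m|%N == odd n.

Definition omega : R := (n%:R) ^+ 2 / 4.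

Definition discr (m : int) : R := 2 * c * m%:~R - (n%:R) ^+ 2 - c ^+ 2.

Definition sqrt_discr (m : int) : C :=
  if 0 <= discr m then (Num.sqrt (discr m))%:C
  else 'i * (Num.sqrt (- discr m))%:C.

Definition kappa_p (m : int) : C := ('i * (c - m%:~R)%:C + sqrt_discr m) / 2.
Definition kappa_m (m : int) : C := ('i * (c - m%:~R)%:C - sqrt_discr m) / 2.

(* First-order reduction of the m-th ODE
     psi'' + i(m-c) psi' + (omega - m^2/4) psi = 0
   on the phase space C^2 of row vectors x = (psi, psi'), written as
   x' = x *m Amx m (row-vector convention of mathcomp's eigenspace). *)
Definition Amx (m : int) : 'M[C]_2 :=
  \matrix_(i < 2, j < 2)
    if i == 0 :> nat then
      (if j == 0 :> nat then 0 else - (omega - m%:~R ^+ 2 / 4)%:C)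
    else
      (if j == 0 :> nat then 1 else - ('i * (m%:~R - c)%:C)).

Definition Ep (m : int) : 'M[C]_2 := eigenspace (Amx m) (kappa_p m).
Definition Em (m : int) : 'M[C]_2 := eigenspace (Amx m) (kappa_m m).

(* total algebraic multiplicity of kappa, over all Fourier modes m in Z',
   is at most k: every finite family of distinct modes contributes <= k *)
Definition total_mult_le (kappa : C) (k : nat) : Prop :=
  forall s : seq int, uniq s ->
    (\sum_(m <- s | inZ' m) mup kappa (char_poly (Amx m)) <= k)%N.

Definition total_mult_eq (kappa : C) (k : nat) : Prop :=
  total_mult_le kappa k /\
  exists s : seq int, uniq s /\
    (\sum_(m <- s | inZ' m) mup kappa (char_poly (Amx m)))%N = k.

(* semi-simplicity of kappa for the block-diagonal linear system:
   geometric multiplicity = algebraic multiplicity in every block *)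
Definition semisimple (kappa : C) : Prop :=
  forall m, inZ' m ->
    \rank (eigenspace (Amx m) kappa) = mup kappa (char_poly (Amx m)).

End GP.

(* Main.v *)
Require Import Defs.
From HB Require Import structures.
From mathcomp Require Import all_boot all_order all_algebra.
From mathcomp Require Import reals complex.
From mathcomp Require Import ring lra zify.
Set Implicit Arguments. Unset Strict Implicit. Unset Printing Implicit Defensive.
Import Order.TTheory GRing.Theory Num.Theory.
Local Open Scope ring_scope.
Local Open Scope complex_scope.

Lemma char_Amx (R : realType) (n : nat) (c : R) (m : int) :
  char_poly (Amx n c m) = 'X * ('X + ('i * (m%:~R - c)%:C)%:P) + ((omega R n - m%:~R ^+ 2 / 4)%:C)%:P.
Proof.
rewrite /char_poly (expand_det_row _ ord0) !big_ord_recl big_ord0 /cofactor.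
rewrite !det_mx11 /char_poly_mx !mxE /=.
rewrite !polyCN /= expr0 expr1 mulr1n mulr0n !mul1r. ring. Qed.

Lemma sqrt_discr_sq (R : realType) (n : nat) (c : R) (m : int) :
  sqrt_discr n c m ^+ 2 = (discr n c m)%:C.
Proof.
rewrite /sqrt_discr; case: ifP => h.
  by rewrite -rmorphXn /= sqr_sqrtr.
rewrite exprMn sqr_i -rmorphXn /= sqr_sqrtr; last by rewrite oppr_ge0 ltW // ltNge h.
by rewrite mulN1r -rmorphN /= opprK.
Qed.

Lemma kappa_sum (R : realType) (n : nat) (c : R) (m : int) :
  kappa_p n c m + kappa_m n c m = - ('i * (m%:~R - c)%:C).
Proof.
by rewrite /kappa_p /kappa_m; field.
Qed.

Lemma kappa_prod (R : realType) (n : nat) (c : R) (m : int) :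
  kappa_p n c m * kappa_m n c m = (omega R n - m%:~R ^+ 2 / 4)%:C.
Proof.
rewrite /kappa_p /kappa_m.
have -> : forall (a b : R[i]), (a + b) / 2 * ((a - b) / 2) = (a ^+ 2 - b ^+ 2) / 4.
  by move=> a b; field.
rewrite sqrt_discr_sq exprMn sqr_i /discr /omega.
by field.
Qed.

Lemma char_fact (R : realType) (n : nat) (c : R) (m : int) :
  char_poly (Amx n c m) = ('X - (kappa_p n c m)%:P) * ('X - (kappa_m n c m)%:P).
Proof.
have -> : forall a b : R[i], ('X - a%:P) * ('X - b%:P) = 'X * ('X - (a + b)%:P) + (a * b)%:P.
  by move=> a b; rewrite polyCD polyCM; ring.
by rewrite kappa_sum kappa_prod char_Amx polyCN opprK.
Qed.

Lemma discr_neq0 (R : realType) (n : nat) (c : R) (m : int) : 0 < c ->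
  m%:~R != ((n%:R) ^+ 2 + c ^+ 2) / (2 * c) -> discr n c m != 0.
Proof.
move=> c0; apply: contra => /eqP h; apply/eqP.
have c2 : 2 * c != 0 by rewrite mulf_neq0 // gt_eqF.
have e : n%:R ^+ 2 + c ^+ 2 = 2 * c * m%:~R by move: h; rewrite /discr; lra.
by rewrite e; field; rewrite gt_eqF.
Qed.

Lemma kappa_diff (R : realType) (n : nat) (c : R) (m : int) :
  kappa_p n c m - kappa_m n c m = sqrt_discr n c m.
Proof. by rewrite /kappa_p /kappa_m; field. Qed.

Lemma kappa_neq (R : realType) (n : nat) (c : R) (m : int) : 0 < c ->
  m%:~R != ((n%:R) ^+ 2 + c ^+ 2) / (2 * c) -> kappa_p n c m != kappa_m n c m.
Proof.
move=> c0 /(discr_neq0 c0) d0; rewrite -subr_eq0 kappa_diff.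
apply: contra d0 => /eqP s0.
apply/eqP; apply: (@complexI R); rewrite -sqrt_discr_sq s0 expr0n; reflexivity.
Qed.

Lemma root_char (R : realType) (n : nat) (c : R) (m : int) (k : R[i]) :
  root (char_poly (Amx n c m)) k = (k == kappa_p n c m) || (k == kappa_m n c m).
Proof. by rewrite char_fact rootM !root_XsubC. Qed.

Lemma mup_char (R : realType) (n : nat) (c : R) (m : int) (k : R[i]) :
  kappa_p n c m != kappa_m n c m ->
  mup k (char_poly (Amx n c m)) = root (char_poly (Amx n c m)) k.
Proof.
move=> hne; rewrite root_char char_fact mupM ?polyXsubC_eq0 //.
rewrite -['X - _]expr1 -['X - (kappa_m _ _ _)%:P]expr1 !mup_XsubCX.
have [<-|h1] := eqVneq (kappa_p n c m) k.
  by rewrite eq_sym (negbTE hne).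
by rewrite add0n eq_sym; case: eqP.
Qed.

Lemma rank_eig (R : realType) (n : nat) (c : R) (m : int) (k : R[i]) :
  \rank (eigenspace (Amx n c m) k) = root (char_poly (Amx n c m)) k.
Proof.
have r1 : (0 < \rank (Amx n c m - k%:M)%R)%N.
  rewrite lt0n mxrank_eq0; apply/eqP => /matrixP /(_ 1 0).
  rewrite !mxE /= mulr0n subr0 => /eqP; by rewrite oner_eq0.
rewrite -eigenvalue_root_char /eigenvalue.
have r2 : (\rank (eigenspace (Amx n c m) k) <= 1)%N.
  by rewrite /eigenspace mxrank_ker; move: r1; case: (\rank _) => [|[|[|]]].
case: eqP => [->|/eqP h] /=; first by rewrite mxrank0.
by apply/eqP; rewrite eqn_leq r2 lt0n mxrank_eq0.
Qed.

Lemma eig_direct (R : realType) (n : nat) (c : R) (m : int) :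
  kappa_p n c m != kappa_m n c m ->
  [/\ eigenvalue (Amx n c m) (kappa_p n c m),
      eigenvalue (Amx n c m) (kappa_m n c m),
      mxdirect (Ep n c m + Em n c m)%MS &
      (Ep n c m + Em n c m :=: 1%:M)%MS].
Proof.
move=> hne.
have e1 : eigenvalue (Amx n c m) (kappa_p n c m) by rewrite eigenvalue_root_char root_char eqxx.
have e2 : eigenvalue (Amx n c m) (kappa_m n c m) by rewrite eigenvalue_root_char root_char eqxx orbT.
have cap0 : (Ep n c m :&: Em n c m)%MS = 0.
  apply/eqP/rowV0P => v; rewrite sub_capmx => /andP[/eigenspaceP h1 /eigenspaceP h2].
  have : (kappa_p n c m - kappa_m n c m) *: v = 0 by rewrite scalerBl -h1 -h2 subrr.
  by move/eqP; rewrite scaler_eq0 subr_eq0 (negbTE hne) => /eqP.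
have rk : \rank (Ep n c m + Em n c m)%MS = 2%N.
  rewrite mxrank_disjoint_sum // /Ep /Em !rank_eig.
  by rewrite -!eigenvalue_root_char e1 e2.
split => //; first by apply/mxdirect_addsP.
apply/eqmxP; rewrite submx1 sub1mx /row_full rk.
by [].
Qed.

Lemma ReCE (R : realType) (z : R[i]) : 'Re z = (complex.Re z)%:C.
Proof. by rewrite ReJ_add Num.Theory.ReE. Qed.

Lemma Re_half (R : realType) (z : R[i]) : complex.Re (z / 2) = complex.Re z / 2.
Proof.
have -> : (2 : R[i])^-1 = ((2 : R)^-1)%:C by rewrite fmorphV /= rmorph_nat.
by case: z => a b /=; rewrite mulr0 subr0.
Qed.

Lemma ReC_add (R : realType) (u v : R[i]) : complex.Re (u + v) = complex.Re u + complex.Re v.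
Proof. by case: u; case: v. Qed.

Lemma ReC_sub (R : realType) (u v : R[i]) : complex.Re (u - v) = complex.Re u - complex.Re v.
Proof. by case: u; case: v. Qed.

Lemma ReC_iR (R : realType) (x : R) : complex.Re ('i * x%:C) = 0.
Proof. by rewrite /= mul0r mulr0 subr0. Qed.

Lemma ReC_sd (R : realType) (n : nat) (c : R) (m : int) :
  complex.Re (sqrt_discr n c m) = if 0 <= discr n c m then Num.sqrt (discr n c m) else 0.
Proof. by rewrite /sqrt_discr; case: ifP => //= _; rewrite mul0r mulr0 subr0. Qed.

Lemma Re_kp (R : realType) (n : nat) (c : R) (m : int) :
  'Re (kappa_p n c m) = (complex.Re (sqrt_discr n c m) / 2)%:C.
Proof. by rewrite ReCE /kappa_p Re_half ReC_add ReC_iR add0r. Qed.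

Lemma Re_km (R : realType) (n : nat) (c : R) (m : int) :
  'Re (kappa_m n c m) = (- (complex.Re (sqrt_discr n c m) / 2))%:C.
Proof. by rewrite ReCE /kappa_m Re_half ReC_sub ReC_iR sub0r mulNr. Qed.

Lemma Re_sign (R : realType) (n : nat) (c : R) (m0 m : int) : 0 < c ->
  (forall m : int, inZ' n m -> m%:~R != ((n%:R) ^+ 2 + c ^+ 2) / (2 * c)) ->
  m0%:~R <= ((n%:R) ^+ 2 + c ^+ 2) / (2 * c) ->
  (forall m : int, inZ' n m -> m%:~R <= ((n%:R) ^+ 2 + c ^+ 2) / (2 * c) -> m <= m0) ->
  inZ' n m ->
  (if m0 < m then 'Re (kappa_p n c m) * 'Re (kappa_m n c m) < 0
   else ('Re (kappa_p n c m) == 0) && ('Re (kappa_m n c m) == 0)).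
Proof.
move=> c0 hB hm0 hmax zm; rewrite Re_kp Re_km ReC_sd.
have c2 : 0 < 2 * c by rewrite mulr_gt0.
case: ltP => hm.
  have hBm : ((n%:R) ^+ 2 + c ^+ 2) / (2 * c) < m%:~R.
    by rewrite ltNge; apply/negP => /(hmax _ zm); rewrite leNgt hm.
  have d0 : 0 < discr n c m.
    by move: hBm; rewrite ltr_pdivrMr // /discr; lra.
  rewrite ifT ?ltW // -rmorphM ltcR.
  have := sqrtr_gt0 (discr n c m); rewrite d0 => s0; nra.
have hBm : m%:~R < ((n%:R) ^+ 2 + c ^+ 2) / (2 * c).
  rewrite lt_neqAle hB //=; apply: le_trans hm0; by rewrite ler_int.
have d0 : discr n c m < 0.
  by move: hBm; rewrite ltr_pdivlMr // /discr; lra.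
rewrite ifF; last by apply/negbTE; rewrite -ltNge.
by rewrite mul0r oppr0; apply/andP; split; apply/eqP; reflexivity.
Qed.

Lemma count_roots (R : realType) (s : seq int) (P : pred int) (f : int -> nat) (q : {poly R}) :
  uniq s -> q != 0 -> (forall m, P m -> (f m <= 1)%N) ->
  (forall m, P m -> (0 < f m)%N -> root q m%:~R) ->
  (\sum_(m <- s | P m) f m <= (size q).-1)%N.
Proof.
move=> us q0 f1 fr.
pose a := fun m => P m && root q m%:~R.
have h1 : (\sum_(m <- s | P m) f m <= count a s)%N.
  elim: s {us} => [|x s IH]; first by rewrite big_nil.
  rewrite big_cons /= /a; case Px: (P x) => /=; last by [].
  case: (posnP (f x)) => [->|fp]; first by rewrite add0n (leq_trans IH) // leq_addl.
  by rewrite fr // leq_add // f1.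
apply: (leq_trans h1); rewrite -size_filter.
have hlt : (size [seq x <- s | a x] < size q)%N.
  rewrite -(size_map (fun x : int => (x%:~R : R))); apply: max_poly_roots q0 _ _.
    by apply/allP => y /mapP[x]; rewrite mem_filter => /andP[/andP[_ ?] _] ->.
  by rewrite map_inj_uniq ?filter_uniq //; apply: intr_inj.
by move: hlt; case: (size q).
Qed.

Lemma root_comp (R : realType) (n : nat) (c : R) (m : int) (a t : R) :
  root (char_poly (Amx n c m)) (a +i* t) ->
  a * (2 * t + m%:~R - c) = 0 /\
  a * a - t * (t + (m%:~R - c)) + ((n%:R) ^+ 2 / 4 - m%:~R ^+ 2 / 4) = 0.
Proof.
rewrite char_Amx /root !hornerE /omega => /eqP h.
have hr := congr1 (@complex.Re R) h; have hi := congr1 (@complex.Im R) h.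
move: hr hi => /= hr hi; split; [rewrite -hi | rewrite -hr]; ring.
Qed.

Lemma mup_le1 (R : realType) (n : nat) (c : R) (m : int) (k : R[i]) : 0 < c ->
  m%:~R != ((n%:R) ^+ 2 + c ^+ 2) / (2 * c) ->
  (mup k (char_poly (Amx n c m)) <= 1)%N /\
  ((0 < mup k (char_poly (Amx n c m)))%N -> root (char_poly (Amx n c m)) k).
Proof.
move=> c0 hm; rewrite mup_char ?kappa_neq //.
by case: (root _ _).
Qed.

Lemma mult_imag (R : realType) (n : nat) (c : R) (kappa : R[i]) : 0 < c ->
  (forall m : int, inZ' n m -> m%:~R != ((n%:R) ^+ 2 + c ^+ 2) / (2 * c)) ->
  'Re kappa = 0 -> total_mult_le n c kappa 2.
Proof.
move=> c0 hB; rewrite ReCE; case: kappa => a t /= ha s us.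
have -> : a = 0 by apply: (@complexI R); rewrite ha.
pose q : {poly R} := ('X + (4 * t)%:P) * 'X + (4 * t ^+ 2 - 4 * c * t - (n%:R) ^+ 2)%:P.
have sq : size q = 3%N.
  by rewrite /q size_MXaddC size_XaddC; case: ifP => // /andP[/eqP h _]; move: (size_XaddC (4 * t)); rewrite h size_poly0.
apply: (@leq_trans ((size q).-1)); last by rewrite sq.
apply: count_roots => //.
- by rewrite -size_poly_eq0 sq.
- by move=> m zm; case: (mup_le1 (0 +i* t) c0 (hB m zm)).
move=> m zm mp; have [_ /(_ mp) hr] := mup_le1 (0 +i* t) c0 (hB m zm).
have [_ e] := root_comp hr.
rewrite /q /root hornerD hornerM hornerD hornerX !hornerC; apply/eqP; rewrite -(mulr0 (-4 : R)) -{}e; field; done.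
Qed.

Lemma mult_nonimag (R : realType) (n : nat) (c : R) (kappa : R[i]) : 0 < c ->
  (forall m : int, inZ' n m -> m%:~R != ((n%:R) ^+ 2 + c ^+ 2) / (2 * c)) ->
  'Re kappa != 0 -> total_mult_le n c kappa 1.
Proof.
move=> c0 hB; rewrite ReCE; case: kappa => a t /= ha s us.
have a0 : a != 0 by apply: contra ha => /eqP ->.
pose q : {poly R} := 'X - (c - 2 * t)%:P.
apply: (@leq_trans ((size q).-1)); first apply: count_roots => //; last by rewrite size_XsubC.
- by rewrite -size_poly_eq0 size_XsubC.
- by move=> m zm; case: (mup_le1 (a +i* t) c0 (hB m zm)).
move=> m zm mp; have [_ /(_ mp) hr] := mup_le1 (a +i* t) c0 (hB m zm).
have [/eqP e _] := root_comp hr.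
move: e; rewrite mulf_eq0 (negbTE a0) /= => /eqP e.
rewrite /q /root !hornerE; apply/eqP; move: e; lra.
Qed.

Lemma semisimple_all (R : realType) (n : nat) (c : R) (kappa : R[i]) : 0 < c ->
  (forall m : int, inZ' n m -> m%:~R != ((n%:R) ^+ 2 + c ^+ 2) / (2 * c)) ->
  semisimple n c kappa.
Proof. by move=> c0 hB m zm; rewrite rank_eig mup_char // kappa_neq // hB. Qed.

Lemma root0_pm (R : realType) (n : nat) (c : R) (m : int) :
  m ^+ 2 = (n%:Z) ^+ 2 -> root (char_poly (Amx n c m)) 0.
Proof.
move=> e; rewrite char_Amx /root !hornerE /omega.
have -> : (m%:~R : R) ^+ 2 = (n%:R) ^+ 2 by rewrite -rmorphXn e rmorphXn.
by rewrite subrr; apply/eqP; reflexivity.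
Qed.

Unset Implicit Arguments.
Set Strict Implicit.
Set Printing Implicit Defensive.

Theorem lemma1 (R : realType) (n : nat) (c : R) (m0 : int) :
  (0 < n)%N -> 0 < c ->
  (forall m : int, inZ' n m -> m%:~R != ((n%:R) ^+ 2 + c ^+ 2) / (2 * c)) ->
  (* m0 = the largest element of Z' not exceeding (n^2+c^2)/(2c) *)
  inZ' n m0 -> m0%:~R <= ((n%:R) ^+ 2 + c ^+ 2) / (2 * c) ->
  (forall m : int, inZ' n m -> m%:~R <= ((n%:R) ^+ 2 + c ^+ 2) / (2 * c) -> m <= m0) ->
  (* (i) *)
  (forall m : int, inZ' n m ->
     [/\ eigenvalue (Amx n c m) (kappa_p n c m),
         eigenvalue (Amx n c m) (kappa_m n c m),
         mxdirect (Ep n c m + Em n c m)%MS,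
         (Ep n c m + Em n c m :=: 1%:M)%MS &
         (if m0 < m then Re (kappa_p n c m) * Re (kappa_m n c m) < 0
          else (Re (kappa_p n c m) == 0) && (Re (kappa_m n c m) == 0))]) /\
  (* (ii) *)
  [/\ semisimple n c 0 /\ total_mult_eq n c 0 2,
      (forall kappa : R[i], Re kappa = 0 ->
         semisimple n c kappa /\ total_mult_le n c kappa 3) &
      (forall kappa : R[i], Re kappa != 0 -> total_mult_le n c kappa 1)].
Proof.
move=> n0 c0 hB zm0 hm0 hmax; split.
  move=> m zm; have [e1 e2 d f] := eig_direct (kappa_neq c0 (hB m zm)).
  by split => //; apply: Re_sign.
split.
- split; first exact: semisimple_all.
  split; first by apply: mult_imag => //; rewrite ReCE.
  exists [:: n%:Z; - n%:Z]; split.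
    rewrite /= andbT inE; apply/negP => /eqP h.
    by move: n0 h; lia.
  have zp : inZ' n n%:Z by rewrite /inZ' absz_nat.
  have zn : inZ' n (- n%:Z) by rewrite /inZ' abszN absz_nat.
  rewrite !big_cons big_nil zp zn !mup_char ?kappa_neq ?hB // !root0_pm //.
  by rewrite sqrrN.
- move=> kappa k0; split; first exact: semisimple_all.
  by move=> s us; apply: leq_trans (mult_imag c0 hB k0 us) _.
- by move=> kappa k0 s us; apply: mult_nonimag.
Qed.
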